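(* There is a function $f$ on the natural numbers such that, for every finite group $G$, $\omega(\mathrm{EPow}(G))\leqslant f(\omega(\mathrm{Pow}(G)))$.
   Context: $\omega$ denotes clique number. $\mathrm{Pow}(G)$ is the graph on $G$ in which distinct $x,y$ are adjacent iff one is a power of the other; $\mathrm{EPow}(G)$ is the graph on $G$ in which distinct $x,y$ are adjacent iff $\langle x,y\rangle$ is cyclic. *)

(* Defs.v *)
From mathcomp Require Import all_boot all_fingroup all_solvable.
Set Implicit Arguments. Unset Strict Implicit. Unset Printing Implicit Defensive.
Local Open Scope group_scope.

Definition pow_adj (gT : finGroupType) (x y : gT) : bool :=
  (x != y) && ((x \in <[y]>) || (y \in <[x]>)).

Definition epow_adj (gT : finGroupType) (x y : gT) : bool :=
  (x != y) && cyclic <<[set x; y]>>.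

Definition is_clique (gT : finGroupType) (adj : gT -> gT -> bool) (S : {set gT}) : bool :=
  [forall x in S, forall y in S, (x != y) ==> adj x y].

Definition clique_number (gT : finGroupType) (adj : gT -> gT -> bool) (G : {set gT}) : nat :=
  \max_(S : {set gT} | (S \subset G) && is_clique adj S) #|S|.

Definition omega_Pow (gT : finGroupType) (G : {set gT}) := clique_number (@pow_adj gT) G.
Definition omega_EPow (gT : finGroupType) (G : {set gT}) := clique_number (@epow_adj gT) G.

(* Main.v *)
Require Import Defs.
From mathcomp Require Import all_boot all_fingroup all_solvable.
From mathcomp Require Import zify.
Local Open Scope group_scope.

Section G.
Variable gT : finGroupType.

Lemma constt_prod (H : {group gT}) (I : eqType) (r : seq I) (F : I -> gT) q :
  abelian H -> (forall i, F i \in H) ->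
  (\prod_(i <- r) F i).`_q = \prod_(i <- r) (F i).`_q.
Proof.
move=> abH FH; elim: r => [|i r IH]; first by rewrite !big_nil constt1.
rewrite !big_cons consttM ?IH //.
apply: (centsP abH); [exact: FH | apply: group_prod => j _; exact: FH].
Qed.

Lemma prod_single (I : eqType) (r : seq I) (F : I -> gT) q :
  uniq r -> q \in r -> (forall i, i != q -> F i = 1) -> \prod_(i <- r) F i = F q.
Proof.
move=> ur qr h; elim: r ur qr => // i r IH /= /andP[ir ur].
rewrite inE big_cons; have [eiq|niq] := eqVneq i q.
  move=> _; subst q; rewrite big1_seq ?mulg1 // => j /andP[_ jr]; apply: h.
  by apply: contraNneq ir => <-.
by move=> /= qr; rewrite h // mul1g IH.
Qed.

Lemma constt_other (x : gT) (p q : nat) : p != q -> (x.`_p).`_q = 1.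
Proof.
move=> npq; apply/constt1P; apply: sub_p_elt (p_elt_constt p x) => r.
by rewrite !inE => /eqP ->.
Qed.


Lemma part_dvd (p a b : nat) : a`_p <= b`_p -> a`_p %| b`_p.
Proof.
rewrite !p_part; case: (ltnP 1 p) => p1.
  by rewrite leq_exp2l // => h; apply: dvdn_exp2l.
move=> _; rewrite [logn p a]lognE.
have -> : prime p = false by case: p p1 => [|[|]].
by rewrite /= expn0 dvd1n.
Qed.

Lemma clique_cyclic (S : {set gT}) :
  (forall x y, x \in S -> y \in S -> x != y -> cyclic <<[set x; y]>>) ->
  exists z, z \in <<S>> /\ S \subset <[z]>.
Proof.
move=> hS.
have hS' : forall x y, x \in S -> y \in S -> cyclic <<[set x; y]>>.
  move=> x y xS yS; have [<-|nxy] := eqVneq x y; last exact: hS.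
  by rewrite setUid; exact: cycle_cyclic.
have abS : abelian <<S>>.
  rewrite abelian_gen; apply/centsP => x xS y yS.
  have := cyclic_abelian (hS' _ _ xS yS) => ab.
  by apply: (centsP ab); apply: mem_gen; rewrite !inE eqxx ?orbT.
case: (set_0Vmem S) => [->|[s0 s0S]].
  by exists 1; split; [exact: group1 | exact: sub0set].
pose n := #|gT|.
pose m (p : nat) := [arg max_(s > s0 in S) #[s.`_p]].
have mS (p : nat) : m p \in S by rewrite /m; case: arg_maxnP.
have mmax (p : nat) t : t \in S -> #[t.`_p] <= #[(m p).`_p].
  by rewrite /m; case: arg_maxnP => // s _ h tS; apply: h.
pose w (p : nat) := (m p).`_p.
have wH (p : nat) : w p \in <<S>>.
  have : w p \in <[m p]> by apply: cycle_constt.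
  by apply/subsetP; rewrite cycle_subG mem_gen.
pose z := \prod_(i < n.+1) w i.
have zH : z \in <<S>> by apply: group_prod => i _.
have zq (q : 'I_n.+1) : z.`_q = w q.
  rewrite /z (@constt_prod _ 'I_n.+1 (index_enum _) (fun i => w i) q abS (fun i => wH i)).
  rewrite (@prod_single _ _ (fun i : 'I_n.+1 => (w i).`_q) q) ?index_enum_uniq ?mem_index_enum //.
    by rewrite /= constt_p_elt // p_elt_constt.
  by move=> i niq; rewrite /= constt_other.
exists z; split => //; apply/subsetP => t tS.
rewrite -(prod_constt t) big_nat_cond; apply: group_prod => p /andP[/andP[_ ptn] _].
have pn : p < n.+1.
  apply: leq_trans ptn _.
  by rewrite ltnS /n orderE max_card.
have : (w p) \in <[z]> by rewrite -(zq (Ordinal pn)) cycle_constt.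
rewrite -cycle_subG => /subsetP; apply.
have cyc := hS' _ _ tS (mS p).
have sub1 : <[t.`_p]> \subset <<[set t; m p]>>.
  rewrite cycle_subG; apply: (subsetP (_ : <[t]> \subset _)); last exact: cycle_constt.
  by rewrite cycle_subG mem_gen // !inE eqxx.
have sub2 : <[w p]> \subset <<[set t; m p]>>.
  rewrite cycle_subG; apply: (subsetP (_ : <[m p]> \subset _)); last exact: cycle_constt.
  by rewrite cycle_subG mem_gen // !inE eqxx orbT.
rewrite -cycle_subG -(cardSg_cyclic cyc sub1 sub2) -!orderE !order_constt.
apply: part_dvd; rewrite -!order_constt; exact: mmax.
Qed.
End G.
Local Close Scope group_scope.
Local Open Scope nat_scope.

Lemma totient_bound n k : 0 < n -> totient n <= k -> n %| ((k.+1)`!) ^ k.+1.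
Proof.
move=> n0 tk; apply/dvdn_partP => // p pi_p.
have := pi_p; rewrite mem_primes => /and3P[pp _ pdn].
have a0 : 0 < logn p n by rewrite logn_gt0.
have ht : totient n = totient (n`_p) * totient (n`_p^') by rewrite -totient_coprime ?coprime_partC // partnC.
have t2 : 0 < totient (n`_p^') by rewrite totient_gt0 part_gt0.
have tp : totient (n`_p) <= k.
  apply: leq_trans tk; rewrite ht; exact: leq_pmulr.
move: tp; rewrite p_part totient_pfactor // => tp.
have p1 : 1 < p := prime_gt1 pp.
have h1 : p.-1 <= k.
  apply: leq_trans tp; apply: leq_pmulr; by rewrite expn_gt0 ltnW.
have h2 : p ^ (logn p n).-1 <= k.
  apply: leq_trans tp; apply: leq_pmull; lia.
have h3 : (logn p n).-1 < p ^ (logn p n).-1 := ltn_expl _ p1.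
apply: dvdn_trans (dvdn_exp2l p (_ : logn p n <= k.+1)) _; first lia.
apply: dvdn_exp2r; apply: dvdn_fact; lia.
Qed.

Theorem theorem4p2 :
  exists f : nat -> nat,
    forall (gT : finGroupType) (G : {group gT}),
      omega_EPow G <= f (omega_Pow G).
Proof.
exists (fun k => ((k.+1)`!) ^ k.+1) => gT G.
rewrite {1}/omega_EPow /clique_number; apply/bigmax_leqP => S /andP[sSG clS].
have hS : forall x y, x \in S -> y \in S -> x != y -> cyclic <<[set x; y]>>.
  move=> x y xS yS nxy.
  by move: clS => /forallP/(_ x)/implyP/(_ xS)/forallP/(_ y)/implyP/(_ yS)/implyP/(_ nxy)/andP[].
have [z [zS SZ]] := @clique_cyclic gT S hS.
have zG : z \in G by apply: (subsetP (_ : <<S>>%g \subset G)) zS; rewrite gen_subG.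
apply: leq_trans (subset_leq_card SZ) _; rewrite -orderE.
apply: dvdn_leq; first by rewrite expn_gt0 fact_gt0.
apply: totient_bound; first exact: order_gt0.
rewrite totient_gen /omega_Pow /clique_number.
apply: (leq_bigmax_cond (F := fun S : {set gT} => #|S|)).
apply/andP; split.
  apply/subsetP => x; rewrite inE => /cycle_generator.
  by apply/subsetP; rewrite cycle_subG.
apply/forallP => x; apply/implyP; rewrite inE => gx.
apply/forallP => y; apply/implyP; rewrite inE => gy.
apply/implyP => nxy; rewrite /pow_adj nxy /=.
move: gy; rewrite /generator => /eqP <-.
by rewrite (cycle_generator gx).
Qed.
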